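(* Let $A,B,C\in\mathfrak{sl}_4(\mathbb R)$ be diagonal matrices. Then the $G_2$-structure $(G_{A,B,C},\varphi)$ has torsion forms $\tau_0=0$, $\tau_1=0$, $\tau_2=-*d\psi$, $\tau_3=*d\varphi$, where $\psi=*\varphi$.
   Context: For commuting $A,B,C\in\mathfrak{sl}_4(\mathbb R)$, $\mathfrak g_{A,B,C}$ is the Lie algebra with basis $\{e_1,\dots,e_7\}$ in which $\langle e_7,e_1,e_2\rangle$ is an abelian subalgebra, $\mathfrak n=\langle e_3,\dots,e_6\rangle$ is an abelian ideal, and in the basis $\{e_3,\dots,e_6\}$, $\mathrm{ad}\,e_7|_{\mathfrak n}=A$, $\mathrm{ad}\,e_1|_{\mathfrak n}=B$, $\mathrm{ad}\,e_2|_{\mathfrak n}=C$; $G_{A,B,C}$ is the simply connected Lie group with this Lie algebra and $\varphi=e^{127}+e^{347}+e^{567}+e^{135}-e^{146}-e^{236}-e^{245}$ is the left-invariant positive 3-form ($\{e^i\}$ dual basis). The metric and orientation induced by $\varphi$ are those for which $\{e_1,\dots,e_7\}$ is an oriented orthonormal basis; $*$ is the corresponding Hodge star. The torsion forms of a $G_2$-structure $\varphi$ are the unique forms $\tau_i\in\Omega^i$, $i=0,1,2,3$ (with $\tau_2$ in the 14-dimensional and $\tau_3$ in the 27-dimensional $G_2$-irreducible component) such that $d\varphi=\tau_0\psi+3\tau_1\wedge\varphi+*\tau_3$ and $d\psi=4\tau_1\wedge\psi+\tau_2\wedge\varphi$. *)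

(* Defs.v *)
(* Left-invariant forms on the 7-dimensional Lie group
   G_{A,B,C} are identified with elements of Lambda g^*, encoded in the
   basis {e^I} (I an increasing multi-index, i.e. a subset of 'I_7).
   Index convention: the ordinal i : 'I_7 stands for e_{i+1}. *)
From HB Require Import structures.
From mathcomp Require Import all_boot all_order all_algebra.
From mathcomp Require Import reals.
Set Implicit Arguments. Unset Strict Implicit. Unset Printing Implicit Defensive.
Import Order.TTheory GRing.Theory Num.Theory.
Local Open Scope ring_scope.

Section Forms.
Variable R : realType.

Definition fscale (r : R) (a : {ffun {set 'I_7} -> R}) : {ffun {set 'I_7} -> R} :=
  [ffun K : {set 'I_7} => r * a K].

(* a (possibly inhomogeneous) element of Lambda (R^7)^*:  sum_I a_I e^I *)
Local Notation form := {ffun {set 'I_7} -> R}.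

Definition eI (I : {set 'I_7}) : form := [ffun K : {set 'I_7} => (K == I)%:R].
Definition e1 (i : 'I_7) : form := eI [set i].

(* sign of the shuffle (I,J): (-1)^{#{(i,j) : i in I, j in J, j < i}},
   so that e^I /\ e^J = sgnIJ I J e^{I u J} for disjoint I, J *)
Definition sgnIJ (I J : {set 'I_7}) : R :=
  (-1) ^+ #|[set p : 'I_7 * 'I_7 | [&& p.1 \in I, p.2 \in J & (p.2 < p.1)%N]]|.

Definition wedge (a b : form) : form :=
  [ffun K : {set 'I_7} => \sum_(I : {set 'I_7} | I \subset K) sgnIJ I (K :\: I) * a I * b (K :\: I)].

Definition is_deg (p : nat) (a : form) : Prop := forall K : {set 'I_7}, #|K| != p -> a K = 0.

(* Hodge star for the metric/orientation making e_1,...,e_7 an oriented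
   orthonormal basis:  * e^I = sgn(I, I^c) e^{I^c}. *)
Definition hodge (a : form) : form := [ffun K : {set 'I_7} => sgnIJ (~: K) K * a (~: K)].

(* Chevalley-Eilenberg differential of left-invariant forms, given structure
   constants c i j k := coefficient of e_k in [e_i, e_j]:
   d e^k (X,Y) = - e^k([X,Y]), i.e. d e^k = - sum_{i<j} c i j k e^i /\ e^j,
   extended as an antiderivation. *)
Definition d1 (c : 'I_7 -> 'I_7 -> 'I_7 -> R) (k : 'I_7) : form :=
  - \sum_(i : 'I_7) \sum_(j : 'I_7 | (i < j)%N) fscale (c i j k) (wedge (e1 i) (e1 j)).

Definition dform (c : 'I_7 -> 'I_7 -> 'I_7 -> R) (a : form) : form :=
  \sum_(I : {set 'I_7}) fscale (a I)
    (\sum_(i in I) fscale ((-1) ^+ #|[set j in I | (j < i)%N]|) (wedge (d1 c i) (eI (I :\ i)))).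

Definition o (k : nat) : 'I_7 := inord k.
Definition e3 (a b c : nat) : form :=
  wedge (wedge (e1 (o a.-1)) (e1 (o b.-1))) (e1 (o c.-1)).
Definition phiG2 : form :=
  e3 1 2 7 + e3 3 4 7 + e3 5 6 7 + e3 1 3 5 - e3 1 4 6 - e3 2 3 6 - e3 2 4 5.
Definition psiG2 : form := hodge phiG2.

(* Torsion forms (tau0,...,tau3) of phi w.r.t. the differential d:
   tau_i of degree i, tau2 in Lambda^2_14 = {b | b /\ psi = 0},
   tau3 in Lambda^3_27 = {g | g /\ phi = 0, g /\ psi = 0}, and
   d phi = tau0 psi + 3 tau1 /\ phi + * tau3,
   d psi = 4 tau1 /\ psi + tau2 /\ phi. *)
Definition is_torsion (d : form -> form) (phi t0 t1 t2 t3 : form) : Prop :=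
  let psi := hodge phi in
  [/\ is_deg 0 t0, is_deg 1 t1, is_deg 2 t2 & is_deg 3 t3] /\
  [/\ wedge t2 psi = 0, wedge t3 phi = 0 & wedge t3 psi = 0] /\
  d phi = wedge t0 psi + fscale 3 (wedge t1 phi) + hodge t3 /\
  d psi = fscale 4 (wedge t1 psi) + wedge t2 phi.

(* The Lie algebra g_{A,B,C}: basis e_1..e_7 (ordinals 0..6),
   <e7,e1,e2> abelian, n = <e3,..,e6> abelian ideal,
   ad e7|n = A, ad e1|n = B, ad e2|n = C in the basis e3..e6
   (matrix convention: [x, e_{3+j}] = sum_i M i j e_{3+i}). *)
Definition in_n (m : 'I_7) : bool := (2 <= m <= 5)%N.
Definition nI (m : 'I_7) : 'I_4 := inord (m - 2).
Definition adM (A B C : 'M[R]_4) (x : 'I_7) : 'M[R]_4 :=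
  if x == o 6 then A else if x == o 0 then B else if x == o 1 then C else 0.
Definition gABC (A B C : 'M[R]_4) (x y k : 'I_7) : R :=
  if ~~ in_n x && in_n y && in_n k then adM A B C x (nI k) (nI y)
  else if in_n x && ~~ in_n y && in_n k then - adM A B C y (nI k) (nI x)
  else 0.

End Forms.

(* Main.v *)
Require Import Defs.
From HB Require Import structures.
From mathcomp Require Import all_boot all_order all_algebra.
From mathcomp Require Import reals.
From Stdlib Require PeanoNat.
From mathcomp Require Import ring lra zify.
Import Order.TTheory GRing.Theory Num.Theory.
Local Open Scope ring_scope.
Definition ent := (int * nat)%type.
Definition tb (m i : nat) : bool := Nat.testbit m i.
Definition cnt (m n : nat) : nat :=
  foldr (fun i a => foldr (fun j b => ([&& tb m i, tb n j & (j < i)%N] : nat) + b)%N 0%N (iota 0 7) + a)%N 0%N (iota 0 7).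
Definition nsgn (m n : nat) : int := if odd (cnt m n) then -1 else 1.
Definition disjb (m n : nat) : bool := all (fun i => ~~ (tb m i && tb n i)) (iota 0 7).
Definition ncoef (s : seq ent) (m : nat) : int := foldr (fun p a => (if p.2 == m then p.1 else 0) + a) 0 s.
Definition r128 := iota 0 128.
Arguments r128 : simpl never.
Definition eqc (s t : seq ent) : bool :=
  all (fun p => (p.2 < 128)%N) (s ++ t) && all (fun m => ncoef s m == ncoef t m) r128.
Definition sneg (s : seq ent) : seq ent := [seq (- p.1, p.2) | p <- s].
Definition sscale (z : int) (s : seq ent) : seq ent := [seq (z * p.1, p.2) | p <- s].
Definition swedge (s t : seq ent) : seq ent :=
  flatten [seq [seq (nsgn x.2 y.2 * x.1 * y.1, Nat.lor x.2 y.2) | y <- filter (fun y : ent => disjb x.2 y.2) t] | x <- s].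
Definition cm (m : nat) : nat := Nat.lxor m 127.
Definition shodge (s : seq ent) : seq ent := [seq (nsgn p.2 (cm p.2) * p.1, cm p.2) | p <- s].
Definition s1 (i : nat) : seq ent := [:: ((1:int), (2 ^ i)%N)].
Definition s3 (a b c : nat) := swedge (swedge (s1 a.-1) (s1 b.-1)) (s1 c.-1).
Definition sphi := (((((s3 1 2 7 ++ s3 3 4 7) ++ s3 5 6 7) ++ s3 1 3 5) ++ sneg (s3 1 4 6)) ++ sneg (s3 2 3 6)) ++ sneg (s3 2 4 5).
Definition spsi := shodge sphi.
Definition sfilt (s : seq ent) : seq ent := filter (fun p : ent => p.1 != 0) s.
Definition innb (m : nat) : bool := (2 <= m <= 5)%N.
Definition slot (a : nat) : nat := if a == 0%N then 6%N else if a == 1%N then 0%N else 1%N.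
Definition dzn (r a b : nat) : int := if a == b then (if a == r then 1 else if a == 3 then -1 else 0) else 0.
Definition czn (q : nat * nat) (x y k : nat) : int :=
  if ~~ innb x && innb y && innb k then (if x == slot q.1 then dzn q.2 (k - 2) (y - 2) else 0)
  else if innb x && ~~ innb y && innb k then (if y == slot q.1 then - dzn q.2 (k - 2) (x - 2) else 0)
  else 0.
Definition sd1 (cz : nat -> nat -> nat -> int) (k : nat) : seq ent :=
  sneg (flatten [seq flatten [seq sscale (cz i j k) (swedge (s1 i) (s1 j)) | j <- filter (fun j => (i < j)%N) (iota 0 7)] | i <- iota 0 7]).
Definition psgn (n : nat) : int := if odd n then -1 else 1.
Definition cntb (m i : nat) : nat := foldr (fun j b => (tb m j && (j < i)%N : nat) + b)%N 0%N (iota 0 7).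
Definition sD cz (m : nat) : seq ent :=
  flatten [seq sscale (psgn (cntb m i)) (swedge (sd1 cz i) [:: ((1:int), Nat.lxor m (2 ^ i)%N)]) | i <- filter (tb m) (iota 0 7)].
Definition sdform cz (s : seq ent) : seq ent := flatten [seq sscale x.1 (sD cz x.2) | x <- s].
Definition qs : seq (nat * nat) := [seq (a, b) | a <- iota 0 3, b <- iota 0 3].
Definition popc (m : nat) : nat := count (tb m) (iota 0 7).
Arguments swedge : simpl never.
Arguments shodge : simpl never.
Arguments sneg : simpl never.
Arguments sscale : simpl never.
Arguments sdform : simpl never.
Arguments sD : simpl never.
Arguments sd1 : simpl never.
Arguments eqc : simpl never.
Arguments ncoef : simpl never.

Definition Dq q := sdform (czn q) sphi.
Definition Pq q := sdform (czn q) spsi.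
Definition T s := shodge (swedge s sphi).
Arguments Dq : simpl never.
Arguments Pq : simpl never.

Lemma foldr_sum (A : Type) (r : seq A) (F : A -> nat) :
  foldr (fun i a => F i + a)%N 0%N r = \sum_(i <- r) F i.
Proof. by elim: r => [|x r IH] /=; rewrite ?big_nil ?big_cons ?IH. Qed.

Section RSide.
Variable R : realType.
Local Notation form := {ffun {set 'I_7} -> R}.

Definition toset (m : nat) : {set 'I_7} := [set i : 'I_7 | tb m i].
Definition slc (s : seq ent) : form := [ffun K => \sum_(p <- s | toset p.2 == K) (p.1)%:~R].

Lemma slc_cat s t : slc (s ++ t) = slc s + slc t.
Proof. by apply/ffunP => K; rewrite !ffunE big_cat. Qed.
Lemma slc_nil : slc [::] = 0.
Proof. by apply/ffunP => K; rewrite !ffunE big_nil. Qed.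
Lemma slc_neg s : slc (sneg s) = - slc s.
Proof. by apply/ffunP => K; rewrite !ffunE big_map -sumrN; apply: eq_bigr => p _; rewrite intrN. Qed.
Lemma slc_scale z s : slc (sscale z s) = fscale (z%:~R) (slc s).
Proof. by apply/ffunP => K; rewrite !ffunE big_map mulr_sumr; apply: eq_bigr => p _; rewrite intrM. Qed.
Lemma slc_flatten (A : Type) (r : seq A) (f : A -> seq ent) :
  slc (flatten (map f r)) = \sum_(i <- r) slc (f i).
Proof. by elim: r => [|x r IH] /=; rewrite ?big_nil ?slc_nil // big_cons slc_cat IH. Qed.
Lemma slc_flattenP (A : Type) (r : seq A) (P : pred A) (f : A -> seq ent) :
  slc (flatten (map f (filter P r))) = \sum_(i <- r | P i) slc (f i).
Proof. by rewrite slc_flatten big_filter. Qed.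

Lemma in_toset m (i : 'I_7) : (i \in toset m) = tb m i.
Proof. by rewrite inE. Qed.

Lemma toset_lor m n : toset (Nat.lor m n) = toset m :|: toset n.
Proof. by apply/setP => i; rewrite !inE /tb PeanoNat.Nat.lor_spec. Qed.

Lemma tb127 (i : 'I_7) : tb 127 i = true.
Proof. by case: i => [[|[|[|[|[|[|[|//]]]]]]]]. Qed.

Lemma toset_cm m : toset (cm m) = ~: toset m.
Proof. apply/setP => i; rewrite !inE /cm /tb PeanoNat.Nat.lxor_spec; have := tb127 i; rewrite /tb => ->; by case: (Nat.testbit m i). Qed.

Lemma expn_pow i : (2 ^ i)%N = Nat.pow 2 i.
Proof. by elim: i => // i IH; rewrite expnS IH. Qed.

Lemma tb_pow (i j : nat) : tb (2 ^ i)%N j = (i == j).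
Proof. rewrite /tb expn_pow. rewrite PeanoNat.Nat.pow2_bits_eqb. by case: (PeanoNat.Nat.eqb_spec i j) => [->|/eqP/negbTE ->]; rewrite ?eqxx. Qed.

Lemma toset_pow (i : 'I_7) : [set i] = toset (2 ^ i)%N.
Proof. by apply/setP => j; rewrite !inE tb_pow eq_sym. Qed.

Lemma toset_lxor m (i : 'I_7) : tb m i -> toset (Nat.lxor m (2 ^ i)%N) = toset m :\ i.
Proof.
move=> hi; apply/setP => j; rewrite !inE /tb PeanoNat.Nat.lxor_spec; have := tb_pow i j; rewrite /tb => ->; rewrite -/(tb m j).
have -> : (i == j :> nat) = (i == j) by [].
case: (eqVneq i j) => [<-|ne]; first by rewrite hi.
by case: (tb m j).
Qed.

Lemma disjb_toset m n : [disjoint toset m & toset n] = disjb m n.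
Proof.
rewrite disjoint_subset; apply/subsetP/allP => [H i|H x].
  rewrite mem_iota /= => hi; have := H (Ordinal hi); rewrite !inE.
  by case: (tb m i) => //= /(_ isT).
rewrite !inE => a; have := H x; rewrite mem_iota /= ltn_ord => /(_ isT).
by rewrite a.
Qed.

Lemma card_toset_gen (P : pred 'I_7) : #|[set x | P x]| = (\sum_(i < 7) P i)%N.
Proof. by rewrite cardsE -sum1_card big_mkcond /=; apply: eq_bigr => i _; rewrite unfold_in; case: (P i). Qed.

Lemma card_toset m : #|toset m| = popc m.
Proof.
rewrite card_toset_gen /popc -sum1_count -(big_mkord xpredT (fun i => (tb m i : nat))).
rewrite /index_iota subn0 [RHS]big_mkcond; apply: eq_bigr => i _; by case: (tb m i).
Qed.


Lemma card_set_gen (U : finType) (P : pred U) : #|[set x | P x]| = (\sum_(i : U) P i)%N.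
Proof. by rewrite cardsE -sum1_card big_mkcond /=; apply: eq_bigr => i _; rewrite unfold_in; case: (P i). Qed.

Lemma cnt_sum m n : cnt m n = (\sum_(i <- iota 0 7) \sum_(j <- iota 0 7) ([&& tb m i, tb n j & (j < i)%N] : nat))%N.
Proof. by rewrite /cnt foldr_sum; apply: eq_bigr => i _; rewrite foldr_sum. Qed.

Lemma sgn_toset m n : sgnIJ R (toset m) (toset n) = (nsgn m n)%:~R.
Proof.
rewrite /sgnIJ.
have -> : #|[set p : 'I_7 * 'I_7 | [&& p.1 \in toset m, p.2 \in toset n & (p.2 < p.1)%N]]| = cnt m n.
  rewrite card_set_gen -(pair_big xpredT xpredT (fun i j : 'I_7 => ([&& i \in toset m, j \in toset n & (j < i)%N] : nat))) /= cnt_sum.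
  under eq_bigr => i _ do under eq_bigr => j _ do rewrite !in_toset.
  under eq_bigr => i _ do rewrite -(big_mkord xpredT (fun j => ([&& tb m i, tb n j & (j < i)%N] : nat))).
  by rewrite -(big_mkord xpredT (fun i => \sum_(0 <= j < 7) ([&& tb m i, tb n j & (j < i)%N] : nat))%N).
by rewrite /nsgn -signr_odd; case: (odd _); rewrite ?expr0 ?expr1 ?intrN.
Qed.

Lemma cntb_card m (i : 'I_7) : #|[set j in toset m | (j < i)%N]| = cntb m i.
Proof.
rewrite card_set_gen /cntb foldr_sum.
under eq_bigr => j _ do rewrite in_toset.
by rewrite -(big_mkord xpredT (fun j => (tb m j && (j < i)%N : nat))).
Qed.


Lemma fscale_sumr (I : Type) (r : seq I) (P : pred I) (F : I -> form) (a : R) :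
  fscale a (\sum_(i <- r | P i) F i) = \sum_(i <- r | P i) fscale a (F i).
Proof. apply/ffunP => K; rewrite !ffunE !sum_ffunE mulr_sumr; apply: eq_bigr => i _; by rewrite ffunE. Qed.
Lemma fscale_suml (I : Type) (r : seq I) (P : pred I) (f : I -> R) (x : form) :
  fscale (\sum_(i <- r | P i) f i) x = \sum_(i <- r | P i) fscale (f i) x.
Proof. apply/ffunP => K; rewrite !ffunE !sum_ffunE mulr_suml; apply: eq_bigr => i _; by rewrite ffunE. Qed.
Lemma fscaleA (a : R) (b : R) (x : form) : fscale a (fscale b x) = fscale (a * b) x.
Proof. by apply/ffunP => K; rewrite !ffunE mulrA. Qed.
Lemma fscale0 (a : R) : fscale a 0 = 0.
Proof. by apply/ffunP => K; rewrite !ffunE mulr0. Qed.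
Lemma fscale0r (x : form) : fscale 0 x = 0.
Proof. by apply/ffunP => K; rewrite !ffunE mul0r. Qed.
Lemma fscale1 (x : form) : fscale 1 x = x.
Proof. by apply/ffunP => K; rewrite !ffunE mul1r. Qed.
Lemma fscaleD (a : R) (x : form) (y : form) : fscale a (x + y) = fscale a x + fscale a y.
Proof. by apply/ffunP => K; rewrite !ffunE mulrDr. Qed.
Lemma fscaleN (a : R) (x : form) : fscale a (- x) = - fscale a x.
Proof. by apply/ffunP => K; rewrite !ffunE mulrN. Qed.

Lemma wedge_suml (I : Type) (r : seq I) (P : pred I) (F : I -> form) (b : form) :
  wedge (\sum_(i <- r | P i) F i) b = \sum_(i <- r | P i) wedge (F i) b.
Proof.
apply/ffunP => K; rewrite !ffunE sum_ffunE.
under eq_bigr => J _ do rewrite sum_ffunE mulr_sumr mulr_suml.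
rewrite exchange_big /=; apply: eq_bigr => i _; by rewrite ffunE.
Qed.
Lemma wedge_sumr (I : Type) (r : seq I) (P : pred I) (F : I -> form) (a : form) :
  wedge a (\sum_(i <- r | P i) F i) = \sum_(i <- r | P i) wedge a (F i).
Proof.
apply/ffunP => K; rewrite !ffunE sum_ffunE.
under eq_bigr => J _ do rewrite sum_ffunE mulr_sumr.
rewrite exchange_big /=; apply: eq_bigr => i _; by rewrite ffunE.
Qed.
Lemma wedge_scalel (a : R) (x : form) (b : form) : wedge (fscale a x) b = fscale a (wedge x b).
Proof.
apply/ffunP => K; rewrite !ffunE mulr_sumr; apply: eq_bigr => I _; rewrite ffunE; ring.
Qed.
Lemma wedge_scaler (a : R) (x : form) (b : form) : wedge b (fscale a x) = fscale a (wedge b x).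
Proof.
apply/ffunP => K; rewrite !ffunE mulr_sumr; apply: eq_bigr => I _; rewrite ffunE; ring.
Qed.
Lemma wedge0l (b : form) : wedge 0 b = 0.
Proof. by apply/ffunP => K; rewrite !ffunE big1 // => I _; rewrite ffunE mulr0 mul0r. Qed.
Lemma wedge0r (b : form) : wedge b 0 = 0.
Proof. by apply/ffunP => K; rewrite !ffunE big1 // => I _; rewrite ffunE mulr0. Qed.
Lemma wedgeDl (x : form) (y : form) (b : form) : wedge (x + y) b = wedge x b + wedge y b.
Proof. apply/ffunP => K; rewrite !ffunE -big_split; apply: eq_bigr => I _; by rewrite !ffunE mulrDr mulrDl. Qed.
Lemma hodgeD (x : form) (y : form) : hodge (x + y) = hodge x + hodge y.
Proof. by apply/ffunP => K; rewrite !ffunE mulrDr. Qed.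
Lemma hodgeN (x : form) : hodge (- x) = - hodge x.
Proof. by apply/ffunP => K; rewrite !ffunE mulrN. Qed.
Lemma hodge0 : hodge (0 : form) = 0.
Proof. by apply/ffunP => K; rewrite !ffunE mulr0. Qed.
Lemma hodge_scale (a : R) (x : form) : hodge (fscale a x) = fscale a (hodge x).
Proof. by apply/ffunP => K; rewrite !ffunE mulrCA. Qed.
Lemma hodge_sum (I : Type) (r : seq I) (P : pred I) (F : I -> form) :
  hodge (\sum_(i <- r | P i) F i) = \sum_(i <- r | P i) hodge (F i).
Proof. apply/ffunP => K; rewrite !ffunE !sum_ffunE mulr_sumr; apply: eq_bigr => i _; by rewrite ffunE. Qed.

Lemma wedgeDr (x : form) (y : form) (b : form) : wedge b (x + y) = wedge b x + wedge b y.
Proof. by apply/ffunP => K; rewrite !ffunE -big_split; apply: eq_bigr => I _; rewrite !ffunE mulrDr. Qed.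

Lemma setlem (I J K : {set 'I_7}) :
  (I \subset K) && (K :\: I == J) = [disjoint I & J] && (K == I :|: J).
Proof.
apply/andP/andP => [[sIK /eqP <-]|[dIJ /eqP ->]]; split.
- rewrite disjoint_subset; apply/subsetP => x xI; by rewrite !inE xI.
- apply/eqP/setP => x; rewrite !inE; case: (boolP (x \in I)) => xI //=.
  by rewrite (subsetP sIK).
- by apply/subsetP => x xI; rewrite inE xI.
- apply/eqP/setP => x; rewrite !inE; case: (boolP (x \in I)) => xI //=.
  by rewrite (disjointFr dIJ xI).
Qed.

Lemma wedge_eI (I J : {set 'I_7}) : wedge (eI R I) (eI R J) =
  if [disjoint I & J] then fscale (sgnIJ R I J) (eI R (I :|: J)) else 0.
Proof.
apply/ffunP => K; rewrite ffunE.
under eq_bigr => L _ do rewrite !ffunE.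
rewrite big_mkcond (bigD1 I) //= big1 => [|L hL]; last first.
  by case: (L \subset K) => //; rewrite (negbTE hL) mulr0 mul0r.
rewrite addr0; have -> : (I == I) = true by apply/eqP.
rewrite mulr1.
have H := setlem I J K.
case: (boolP [disjoint I & J]) => dIJ; rewrite ?ffunE; last first.
  move: H; rewrite (negbTE dIJ) /=.
  by case: (I \subset K) => //= ->; rewrite mulr0.
case: (eqVneq K (I :|: J)) => eK.
  have e2 : (I :|: J == I :|: J) = true by apply/eqP.
  move: H; rewrite dIJ eK e2 /= => /andP [-> /eqP ->].
  by have -> : (J == J) = true by apply/eqP.
move: H; rewrite dIJ (negbTE eK) /=.
by case: (I \subset K) => /= [->|_]; rewrite !mulr0.
Qed.

Lemma slc1 (x : ent) : slc [:: x] = fscale (x.1%:~R) (eI R (toset x.2)).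
Proof. by apply/ffunP => K; rewrite !ffunE big_cons big_nil eq_sym; case: eqP; rewrite ?addr0 ?mulr1 ?mulr0. Qed.

Lemma slc_cons x s : slc (x :: s) = slc [:: x] + slc s.
Proof. by rewrite -slc_cat. Qed.

Lemma eI_slc m : eI R (toset m) = slc [:: (1, m)].
Proof. by rewrite slc1 /= fscale1. Qed.

Lemma e1_slc (i : 'I_7) : e1 R i = slc (s1 i).
Proof. by rewrite /e1 toset_pow eI_slc. Qed.

Lemma wedge_slc11 x y : wedge (slc [:: x]) (slc [:: y]) = slc (swedge [:: x] [:: y]).
Proof.
rewrite !slc1 wedge_scalel wedge_scaler wedge_eI /swedge /= disjb_toset.
case: (disjb x.2 y.2) => /=; last by rewrite slc_nil !fscale0.
by rewrite slc1 /= !fscaleA toset_lor sgn_toset !intrM; congr fscale; ring.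
Qed.

Lemma wedge_slc1 x t : wedge (slc [:: x]) (slc t) = slc (swedge [:: x] t).
Proof.
elim: t => [|y t IH]; first by rewrite slc_nil wedge0r /swedge /= ?slc_nil.
rewrite (slc_cons y t) wedgeDr IH wedge_slc11 -slc_cat /swedge /=.
by case: (disjb x.2 y.2); rewrite /= ?cats0.
Qed.

Lemma wedge_slc s t : wedge (slc s) (slc t) = slc (swedge s t).
Proof.
elim: s => [|x s IH]; first by rewrite slc_nil wedge0l /swedge /= ?slc_nil.
rewrite (slc_cons x s) wedgeDl IH wedge_slc1 -slc_cat /swedge /=.
by rewrite cats0.
Qed.

Lemma hodge_slc s : hodge (slc s) = slc (shodge s).
Proof.
apply/ffunP => K; rewrite !ffunE big_map mulr_sumr.
apply: eq_big => [p|p hp] /=.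
  by rewrite toset_cm; apply/eqP/eqP => [->|<-]; rewrite setCK.
by rewrite intrM -sgn_toset toset_cm (eqP hp) setCK.
Qed.

Lemma ncoef_cons p s m : ncoef (p :: s) m = (if p.2 == m then p.1 else 0) + ncoef s m.
Proof. by []. Qed.

Lemma ncoef_sum s m : ncoef s m = \sum_(p <- s | p.2 == m) p.1.
Proof. elim: s => [|p s IH]; first by rewrite big_nil. rewrite ncoef_cons big_cons IH; by case: (p.2 == m); rewrite ?add0r. Qed.

Lemma slc_ncoef s K : all (fun p : ent => (p.2 < 128)%N) s ->
  slc s K = \sum_(m <- r128 | toset m == K) (ncoef s m)%:~R.
Proof.
elim: s => [|p s IH].
  by rewrite ffunE big_nil big1 // => m _; rewrite intr0.
rewrite [all _ _]/= => /andP [hp hs].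
have h1 : slc [:: p] K = if toset p.2 == K then p.1%:~R else 0.
  by rewrite ffunE big_cons big_nil; case: ifP; rewrite ?addr0.
rewrite (slc_cons p s) ffunE (IH hs) h1.
under [RHS]eq_bigr => m _ do rewrite ncoef_cons intrD.
rewrite big_split; congr (_ + _).
rewrite big_mkcond.
rewrite (eq_bigr (fun m => if m == p.2 then (if toset p.2 == K then p.1%:~R else 0) else 0)); last first.
  move=> m _; case: (eqVneq m p.2) => [->//|ne].
  by case: (toset m == K); rewrite ?mulr0z.
have hr : p.2 \in r128 by rewrite mem_iota.
rewrite (bigD1_seq p.2 hr (iota_uniq 0 128)) eqxx big1 => [|m /negbTE -> //].
by rewrite [RHS]addr0.
Qed.

Lemma eqc_slc s t : eqc s t -> slc s = slc t.
Proof.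
move=> /andP [hb /allP he]; move: hb; rewrite all_cat => /andP [hs ht].
apply/ffunP => K; rewrite !slc_ncoef //.
rewrite big_seq_cond [RHS]big_seq_cond; apply: eq_bigr => m /andP [hm _].
by rewrite (eqP (he m hm)).
Qed.

Definition cR (cz : nat -> nat -> nat -> int) : 'I_7 -> 'I_7 -> 'I_7 -> R :=
  fun i j k => (cz i j k)%:~R.

Lemma d1_int cz (k : 'I_7) : d1 (cR cz) k = slc (sd1 cz k).
Proof.
rewrite /d1 /sd1 slc_neg slc_flatten; congr (- _).
under eq_bigr => i _ do under eq_bigr => j _ do rewrite !e1_slc wedge_slc -slc_scale.
under [RHS]eq_bigr => i _ do rewrite slc_flattenP.
under eq_bigr => i _ do rewrite -(big_mkord (fun j => (i < j)%N) (fun j => slc (sscale (cz i j k) (swedge (s1 i) (s1 j))))).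
by rewrite -(big_mkord xpredT (fun i => \sum_(0 <= j < 7 | (i < j)%N) slc (sscale (cz i j k) (swedge (s1 i) (s1 j))))).
Qed.

Definition DI (c : 'I_7 -> 'I_7 -> 'I_7 -> R) (I : {set 'I_7}) : form :=
  \sum_(i in I) fscale ((-1) ^+ #|[set j in I | (j < i)%N]|) (wedge (d1 c i) (eI R (I :\ i))).

Lemma psgnE n : (-1) ^+ n = (psgn n)%:~R :> R.
Proof. by rewrite /psgn -signr_odd; case: (odd n); rewrite ?expr0 ?expr1 ?intrN. Qed.

Lemma DI_int cz m : DI (cR cz) (toset m) = slc (sD cz m).
Proof.
rewrite /DI /sD slc_flattenP.
rewrite (eq_bigl (fun i : 'I_7 => tb m i)); last by move=> i; rewrite in_toset.
under eq_bigr => i hi do rewrite cntb_card psgnE d1_int -(@toset_lxor m i hi) eI_slc wedge_slc -slc_scale.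
by rewrite -(big_mkord (tb m) (fun i => slc (sscale (psgn (cntb m i)) (swedge (sd1 cz i) [:: (1, Nat.lxor m (2 ^ i)%N)])))).
Qed.

Lemma dform_slc c s : dform c (slc s) = \sum_(x <- s) fscale (x.1%:~R) (DI c (toset x.2)).
Proof.
rewrite /dform -/(DI c).
under eq_bigr => I _ do rewrite ffunE fscale_suml big_mkcond /=.
rewrite exchange_big /=; apply: eq_bigr => x _.
rewrite (bigD1 (toset x.2)) //=.
rewrite [X in _ + X]big1 => [|I hI]; last by rewrite eq_sym (negbTE hI).
have -> : (toset x.2 == toset x.2) = true by apply/eqP.
by rewrite addr0.
Qed.

Lemma dform_int cz s : dform (cR cz) (slc s) = slc (sdform cz s).
Proof.
rewrite dform_slc /sdform slc_flatten; apply: eq_bigr => x _.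
by rewrite DI_int slc_scale.
Qed.

Lemma fscaleC (a b : R) (x : form) : fscale a (fscale b x) = fscale b (fscale a x).
Proof. by rewrite !fscaleA mulrC. Qed.

Lemma d1_lin (Q : Type) (r : seq Q) (lam : Q -> R) (cq : Q -> 'I_7 -> 'I_7 -> 'I_7 -> R) c :
  (forall i j k, c i j k = \sum_(q <- r) lam q * cq q i j k) ->
  forall k, d1 c k = \sum_(q <- r) fscale (lam q) (d1 (cq q) k).
Proof.
move=> Hc k; rewrite /d1.
under eq_bigr => i _ do under eq_bigr => j _ do rewrite Hc fscale_suml.
under eq_bigr => i _ do rewrite exchange_big.
rewrite exchange_big -sumrN; apply: eq_bigr => q _.
rewrite fscaleN fscale_sumr; congr (- _); apply: eq_bigr => i _.
rewrite fscale_sumr; apply: eq_bigr => j _; by rewrite fscaleA.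
Qed.

Lemma dform_lin (Q : Type) (r : seq Q) (lam : Q -> R) (cq : Q -> 'I_7 -> 'I_7 -> 'I_7 -> R) c a :
  (forall i j k, c i j k = \sum_(q <- r) lam q * cq q i j k) ->
  dform c a = \sum_(q <- r) fscale (lam q) (dform (cq q) a).
Proof.
move=> Hc; rewrite /dform.
under eq_bigr => I _ do under eq_bigr => i _ do rewrite (@d1_lin _ r lam cq c Hc) wedge_suml fscale_sumr.
under eq_bigr => I _ do rewrite exchange_big fscale_sumr.
rewrite exchange_big; apply: eq_bigr => q _.
rewrite fscale_sumr; apply: eq_bigr => I _.
rewrite fscaleC fscale_sumr; congr fscale; apply: eq_bigr => i _.
by rewrite wedge_scalel fscaleC.
Qed.

Lemma e3_slc a b c : (a.-1 < 7)%N -> (b.-1 < 7)%N -> (c.-1 < 7)%N -> e3 R a b c = slc (s3 a b c).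
Proof. by move=> ha hb hc; rewrite /e3 /s3 !e1_slc /o (inordK ha) (inordK hb) (inordK hc) !wedge_slc. Qed.

Lemma phi_slc : phiG2 R = slc sphi.
Proof.
rewrite /phiG2 (e3_slc 1 2 7 isT isT isT) (e3_slc 3 4 7 isT isT isT) (e3_slc 5 6 7 isT isT isT).
rewrite (e3_slc 1 3 5 isT isT isT) (e3_slc 1 4 6 isT isT isT) (e3_slc 2 3 6 isT isT isT) (e3_slc 2 4 5 isT isT isT).
by rewrite -!slc_neg -!slc_cat.
Qed.

Lemma intr_if (b : bool) (u v : int) : ((if b then u else v)%:~R : R) = if b then u%:~R else v%:~R.
Proof. by case: b. Qed.

Lemma dzR r a b : ((dzn r a b)%:~R : R) = if a == b then (if a == r then 1 else if a == 3 then -1 else 0) else 0.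
Proof. by rewrite /dzn !intr_if mulr1z mulrN1z mulr0z. Qed.

Lemma tr_inord (M : 'M[R]_4) : \tr M = M (inord 0) (inord 0) + M (inord 1) (inord 1) + M (inord 2) (inord 2) + M (inord 3) (inord 3).
Proof.
rewrite /mxtrace (eq_bigr (fun i : 'I_4 => M (inord i) (inord i))) => [|i _]; last by rewrite inord_val.
rewrite -(big_mkord xpredT (fun i => M (inord i) (inord i))) /index_iota /= !big_cons big_nil.
by rewrite !addrA addr0.
Qed.

Lemma diag_dec (M : 'M[R]_4) : is_diag_mx M -> \tr M = 0 -> forall a b : 'I_4,
  M a b = \sum_(r <- iota 0 3) M (inord r) (inord r) * (dzn r a b)%:~R.
Proof.
move=> /is_diag_mxP Hd; rewrite tr_inord => Ht [va ha] [vb hb].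
have -> : M (Ordinal ha) (Ordinal hb) = M (inord va) (inord vb).
  by congr (M _ _); apply: val_inj; rewrite /= inordK.
rewrite /= !big_cons big_nil !dzR.
move: ha hb; case: va => [|[|[|[|va]]]] // _; case: vb => [|[|[|[|vb]]]] // _ /=.
all: rewrite ?mulr1 ?mulr0 ?addr0 ?add0r ?mulrN1 //.
all: try (by rewrite Hd // !inordK).
have h : M (inord 3) (inord 3) = 0 - (M (inord 0) (inord 0) + M (inord 1) (inord 1) + M (inord 2) (inord 2)).
  by rewrite -Ht; ring.
by rewrite h; ring.
Qed.

Section Gdec.
Variables (A B C : 'M[R]_4).
Hypotheses (dA : is_diag_mx A) (dB : is_diag_mx B) (dC : is_diag_mx C).
Hypotheses (tA : \tr A = 0) (tB : \tr B = 0) (tC : \tr C = 0).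

Definition mats (m : nat) := if m == 0%N then A else if m == 1%N then B else C.
Definition lam (q : nat * nat) : R := mats q.1 (inord q.2) (inord q.2).

Lemma inner_dec (x : 'I_7) (a b : 'I_4) m :
  \sum_(r <- iota 0 3) lam (m, r) * ((if val x == slot m then dzn r a b else 0)%:~R) =
  if val x == slot m then mats m a b else 0.
Proof.
case: ifP => _; last by rewrite big1 // => r _; rewrite mulr0z mulr0.
have [d t] : is_diag_mx (mats m) /\ \tr (mats m) = 0.
  by rewrite /mats; case: ifP => _; [|case: ifP => _]; split.
by rewrite (@diag_dec (mats m) d t a b).
Qed.

Lemma ox (x : 'I_7) n : (n < 7)%N -> (x == o n) = (val x == n).
Proof. by move=> h; rewrite /o -val_eqE /= inordK. Qed.

Lemma adM_dec (x : 'I_7) (a b : 'I_4) :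
  adM A B C x a b = \sum_(q <- qs) lam q * ((if val x == slot q.1 then dzn q.2 a b else 0)%:~R).
Proof.
rewrite big_allpairs; under eq_bigr => m _ do rewrite inner_dec.
rewrite /= !big_cons big_nil /adM /mats /slot /= !ox //.
case: x => vx hx /=.
by case: vx hx => [|[|[|[|[|[|[|vx]]]]]]] hx //=; rewrite ?addr0 ?add0r ?mxE.
Qed.

Definition cq (q : nat * nat) : 'I_7 -> 'I_7 -> 'I_7 -> R := cR (czn q).

Lemma gABC_dec x y k : gABC A B C x y k = \sum_(q <- qs) lam q * cq q x y k.
Proof.
rewrite /gABC /cq /cR /czn.
have -> : in_n x = innb x by [].
have -> : in_n y = innb y by [].
have -> : in_n k = innb k by [].
case: ifP => h1.
  rewrite adM_dec; apply: eq_bigr => q _; congr (_ * _).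
  move/andP: h1 => [/andP [_ hy] hk].
  have vk : nI k = (k - 2)%N :> nat by rewrite /nI inordK //; move: hk; rewrite /innb; lia.
  have vy : nI y = (y - 2)%N :> nat by rewrite /nI inordK //; move: hy; rewrite /innb; lia.
  by rewrite vk vy.
case: ifP => h2; last by rewrite big1 // => q _; rewrite mulr0z mulr0.
rewrite adM_dec -sumrN; apply: eq_bigr => q _.
move/andP: h2 => [/andP [hx _] hk].
have vk : nI k = (k - 2)%N :> nat by rewrite /nI inordK //; move: hk; rewrite /innb; lia.
have vx : nI x = (x - 2)%N :> nat by rewrite /nI inordK //; move: hx; rewrite /innb; lia.
rewrite vk vx; case: ifP => _; by rewrite ?intrN ?mulrN ?mulr0z ?mulr0 ?oppr0.
Qed.

End Gdec.

Definition LC (Q : Type) (r : seq Q) (mu : Q -> R) (X : Q -> seq ent) : form :=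
  \sum_(q <- r) fscale (mu q) (slc (X q)).
Arguments LC {Q}.

Lemma LC_hodge (Q : Type) (r : seq Q) (mu : Q -> R) (X : Q -> seq ent) : hodge (LC r mu X) = LC r mu (fun q => shodge (X q)).
Proof. rewrite /LC hodge_sum; apply: eq_bigr => q _; by rewrite hodge_scale hodge_slc. Qed.
Lemma LC_neg (Q : Type) (r : seq Q) (mu : Q -> R) (X : Q -> seq ent) : - (LC r mu X) = LC r mu (fun q => sneg (X q)).
Proof. rewrite /LC -sumrN; apply: eq_bigr => q _; by rewrite slc_neg fscaleN. Qed.
Lemma LC_wedgel (Q : Type) (r : seq Q) (mu : Q -> R) (X : Q -> seq ent) t : wedge (LC r mu X) (slc t) = LC r mu (fun q => swedge (X q) t).
Proof. rewrite /LC wedge_suml; apply: eq_bigr => q _; by rewrite wedge_scalel wedge_slc. Qed.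
Lemma LC_wedger (Q : Type) (r : seq Q) (mu : Q -> R) (X : Q -> seq ent) t : wedge (slc t) (LC r mu X) = LC r mu (fun q => swedge t (X q)).
Proof. rewrite /LC wedge_sumr; apply: eq_bigr => q _; by rewrite wedge_scaler wedge_slc. Qed.
Lemma LC_add (Q : Type) (r : seq Q) (mu : Q -> R) (X Y : Q -> seq ent) : LC r mu X + LC r mu Y = LC r mu (fun q => X q ++ Y q).
Proof. rewrite /LC -big_split; apply: eq_bigr => q _; by rewrite slc_cat fscaleD. Qed.
Lemma LC_scale (Q : Type) (r : seq Q) (mu : Q -> R) (X : Q -> seq ent) (z : int) : fscale (z%:~R) (LC r mu X) = LC r mu (fun q => sscale z (X q)).
Proof. rewrite /LC fscale_sumr; apply: eq_bigr => q _; by rewrite slc_scale fscaleC. Qed.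
Lemma LC_nil (Q : Type) (r : seq Q) (mu : Q -> R) : LC r mu (fun _ : Q => [::]) = 0.
Proof. rewrite /LC big1 // => q _; by rewrite slc_nil fscale0. Qed.

Lemma LC_eq_all (Q : eqType) (r : seq Q) (mu : Q -> R) (X Y : Q -> seq ent) : all (fun q => eqc (X q) (Y q)) r -> LC r mu X = LC r mu Y.
Proof.
move=> /allP H; rewrite /LC big_seq [RHS]big_seq; apply: eq_bigr => q hq.
by rewrite (eqc_slc _ _ (H q hq)).
Qed.
Lemma LC_zero (Q : eqType) (r : seq Q) (mu : Q -> R) (X : Q -> seq ent) : all (fun q => eqc (X q) [::]) r -> LC r mu X = 0.
Proof. by move=> H; rewrite (LC_eq_all _ _ mu _ _ H) LC_nil. Qed.

Lemma LC_deg (Q : eqType) (r : seq Q) (mu : Q -> R) (X : Q -> seq ent) d : all (fun q => all (fun p : ent => popc p.2 == d) (X q)) r -> is_deg d (LC r mu X).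
Proof.
move=> /allP H K hK; rewrite /LC sum_ffunE big_seq big1 // => q hq.
rewrite ffunE ffunE big_seq_cond big1 ?mulr0 // => p /andP [hp /eqP e].
have := allP (H q hq) p hp; rewrite -card_toset e => /eqP e2.
by move: hK; rewrite e2 eqxx.
Qed.

Lemma card_sets7 : #|{set 'I_7}| = 128.
Proof. by rewrite -cardsT -powersetT card_powerset cardsT card_ord. Qed.

Lemma inj_chk : all (fun a => all (fun b => (a == b) || has (fun i => tb a i != tb b i) (iota 0 7)) r128) r128.
Proof. by vm_compute. Qed.

Lemma toset_inj a b : (a < 128)%N -> (b < 128)%N -> toset a = toset b -> a = b.
Proof.
move=> ha hb e; have := allP inj_chk a; rewrite mem_iota ha => /(_ isT) /allP /(_ b).
rewrite mem_iota hb => /(_ isT) /orP [/eqP //|/hasP [i]].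
rewrite mem_iota add0n => /andP [_ hi] ne; have := congr1 (fun S : {set 'I_7} => Ordinal hi \in S) e.
by rewrite /= !in_toset => e2; move: ne; rewrite e2 eqxx.
Qed.

Lemma toset_surj (K : {set 'I_7}) : exists2 m, (m < 128)%N & toset m = K.
Proof.
pose f (m : 'I_128) := toset m.
have injf : injective f by move=> a b e; apply: val_inj; exact: (toset_inj _ _ (ltn_ord a) (ltn_ord b) e).
have cr : (#|{set 'I_7}| <= #|'I_128|)%N by rewrite card_sets7 card_ord.
have /codomP [m ->] := inj_card_onto injf cr K.
by exists m.
Qed.

Lemma form_dec (u : form) : u = LC r128 (fun m => u (toset m)) (fun m => [:: (1, m)]).
Proof.
apply/ffunP => K; rewrite /LC sum_ffunE.
have [m0 hm0 e0] := toset_surj K.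
have hr : m0 \in r128 by rewrite mem_iota.
rewrite (bigD1_seq m0 hr (iota_uniq 0 128)) /= big_seq_cond big1 => [|m /andP [hm ne]].
  by rewrite ffunE -eI_slc ffunE e0 eqxx mulr1 [RHS]addr0.
rewrite ffunE -eI_slc ffunE.
have -> : (K == toset m) = false.
  apply/negbTE/eqP => e; move: ne; rewrite -e0 in e.
  by rewrite (toset_inj _ _ hm0 _ e) ?eqxx //; move: hm; rewrite mem_iota.
by rewrite mulr0.
Qed.

Lemma LC_deg_eq d (u : form) X Y : is_deg d u ->
  all (fun m => (popc m != d) || eqc (X m) (Y m)) r128 ->
  LC r128 (fun m => u (toset m)) X = LC r128 (fun m => u (toset m)) Y.
Proof.
move=> hu /allP H; rewrite /LC big_seq [RHS]big_seq; apply: eq_bigr => m hm.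
case/orP: (H m hm) => [hp|e]; last by rewrite (eqc_slc _ _ e).
by rewrite hu ?fscale0r // card_toset.
Qed.

Lemma fscale_inj (a : R) (x y : form) : a != 0 -> fscale a x = fscale a y -> x = y.
Proof.
move=> ha e; apply/ffunP => K; have := congr1 (fun f : form => f K) e.
by rewrite !ffunE => /(mulfI ha).
Qed.

End RSide.

Arguments form_dec {R}.
Arguments LC_deg_eq {R d u X Y}.
Arguments LC_nil {R Q}.
Arguments fscale_inj {R a x y}.

Section Ids.
Variable R : realType.
Local Notation form := {ffun {set 'I_7} -> R}.

Lemma hodge_invol (u : form) : hodge (hodge u) = u.
Proof.
rewrite [in LHS](form_dec u) !LC_hodge [in RHS](form_dec u).
apply: LC_eq_all; by vm_compute.
Qed.

Lemma natrZ n : (n%:R : R) = (n%:Z)%:~R.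
Proof. by rewrite pmulrn. Qed.

Lemma idA (u : form) : is_deg 0 u ->
  hodge (wedge (wedge u (slc R spsi)) (slc R sphi)) = fscale ((7:int)%:~R) u.
Proof.
move=> hu; rewrite (form_dec u) !LC_wedgel LC_hodge LC_scale.
apply: (LC_deg_eq hu); by vm_compute.
Qed.

Lemma idB (u : form) : is_deg 1 u -> wedge (wedge u (slc R sphi)) (slc R sphi) = 0.
Proof.
move=> hu; rewrite (form_dec u) !LC_wedgel -(LC_nil r128 (fun m => u (toset m))).
apply: (LC_deg_eq hu); by vm_compute.
Qed.

Lemma idB2 (u : form) : is_deg 1 u ->
  wedge (hodge (wedge u (slc R sphi))) (slc R sphi) = fscale ((-4:int)%:~R) (hodge u).
Proof.
move=> hu; rewrite (form_dec u) !LC_wedgel !LC_hodge LC_wedgel LC_scale.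
apply: (LC_deg_eq hu); by vm_compute.
Qed.

Lemma idC (u : form) : is_deg 3 u -> wedge (hodge u) (slc R sphi) = wedge u (slc R spsi).
Proof.
move=> hu; rewrite (form_dec u) LC_hodge !LC_wedgel.
apply: (LC_deg_eq hu); by vm_compute.
Qed.

Lemma idD (u : form) : is_deg 2 u ->
  hodge (wedge (hodge (wedge u (slc R sphi))) (slc R sphi)) - hodge (wedge u (slc R sphi)) = fscale ((2:int)%:~R) u.
Proof.
move=> hu; rewrite (form_dec u) !LC_wedgel !LC_hodge LC_wedgel LC_hodge LC_neg LC_add LC_scale.
apply: (LC_deg_eq hu); by vm_compute.
Qed.

End Ids.

Arguments gABC_dec {R A B C}.
Arguments idA {R u}.
Arguments idB {R u}.
Arguments idB2 {R u}.
Arguments idC {R u}.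
Arguments idD {R u}.
Arguments hodge_invol {R}.
Arguments dform_lin {R Q r lam cq c}.
Arguments dform_int {R}.
Arguments hodge_slc {R}.
Arguments phi_slc {R}.

Theorem corollary4p8 (R : realType) (A B C : 'M[R]_4) :
  is_diag_mx A -> is_diag_mx B -> is_diag_mx C ->
  \tr A = 0 -> \tr B = 0 -> \tr C = 0 ->
  let d := dform (gABC A B C) in
  let phi := phiG2 R in
  let psi := hodge phi in
  is_torsion d phi 0 0 (- hodge (d psi)) (hodge (d phi)) /\
  (forall t0 t1 t2 t3 : {ffun {set 'I_7} -> R}, is_torsion d phi t0 t1 t2 t3 ->
     [/\ t0 = 0, t1 = 0, t2 = - hodge (d psi) & t3 = hodge (d phi)]).
Proof.
move=> dA dB dC tA tB tC d phi psi.
have Hg := gABC_dec dA dB dC tA tB tC.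
have Ephi : phiG2 R = slc R sphi := phi_slc.
have Epsi : hodge (phiG2 R) = slc R spsi by rewrite Ephi hodge_slc.
have EDphi : dform (gABC A B C) (phiG2 R) = @LC R _ qs (lam R A B C) Dq.
  rewrite Ephi (dform_lin _ Hg) /LC; apply: eq_bigr => q _; by rewrite /cq dform_int.
have EDpsi : dform (gABC A B C) (hodge (phiG2 R)) = @LC R _ qs (lam R A B C) Pq.
  rewrite Epsi (dform_lin _ Hg) /LC; apply: eq_bigr => q _; by rewrite /cq dform_int.
rewrite /d /psi /phi /is_torsion; cbv zeta.
rewrite EDpsi EDphi Epsi Ephi.
split.
  rewrite !LC_hodge !LC_neg !LC_wedgel !wedge0l !fscale0 !add0r.
  split; [split|split; [split|split]].
  - by move=> K _; rewrite ffunE.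
  - by move=> K _; rewrite ffunE.
  - apply: LC_deg; by vm_compute.
  - apply: LC_deg; by vm_compute.
  - apply: LC_zero; by vm_compute.
  - apply: LC_zero; by vm_compute.
  - apply: LC_zero; by vm_compute.
  - apply: LC_eq_all; by vm_compute.
  - apply: LC_eq_all; by vm_compute.
move=> t0 t1 t2 t3 [[g0 g1 g2 g3] [[w2 w3a w3b] [H1 H2]]].
have h7 : ((7:int)%:~R : R) != 0 by rewrite intr_eq0.
have h3 : (3 : R) != 0 by rewrite pnatr_eq0.
have h4 : ((-4:int)%:~R : R) != 0 by rewrite intr_eq0.
have h2 : ((2:int)%:~R : R) != 0 by rewrite intr_eq0.
have Z1 : hodge (wedge (@LC R _ qs (lam R A B C) Dq) (slc R sphi)) = 0.
  rewrite LC_wedgel LC_hodge; apply: LC_zero; by vm_compute.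
have ht0 : t0 = 0.
  have e : hodge (wedge (@LC R _ qs (lam R A B C) Dq) (slc R sphi)) =
           hodge (wedge (wedge t0 (slc R spsi) + fscale 3 (wedge t1 (slc R sphi)) + hodge t3) (slc R sphi)).
    by rewrite -H1.
  move: e; rewrite Z1 !wedgeDl wedge_scalel (idB g1) fscale0 addr0 (idC g3) w3b addr0 (idA g0).
  move=> e; apply: (fscale_inj h7); by rewrite -e fscale0.
rewrite ht0 wedge0l add0r in H1.
have Z2 : wedge (hodge (@LC R _ qs (lam R A B C) Dq)) (slc R sphi) = 0.
  rewrite LC_hodge LC_wedgel; apply: LC_zero; by vm_compute.
have ht1 : t1 = 0.
  have e : wedge (hodge (@LC R _ qs (lam R A B C) Dq)) (slc R sphi) =
           wedge (hodge (fscale 3 (wedge t1 (slc R sphi)) + hodge t3)) (slc R sphi).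
    by rewrite -H1.
  move: e; rewrite Z2 hodgeD hodge_scale hodge_invol wedgeDl wedge_scalel w3a addr0 (idB2 g1) fscaleA.
  move=> e; have e2 : hodge t1 = 0.
    apply: (fscale_inj (mulf_neq0 h3 h4)); by rewrite -e fscale0.
  by rewrite -(hodge_invol t1) e2 hodge0.
rewrite ht1 wedge0l fscale0 add0r in H1.
rewrite ht1 wedge0l fscale0 add0r in H2.
split => //.
- apply: (fscale_inj h2); rewrite -(idD g2) -H2 !LC_hodge LC_wedgel LC_hodge LC_neg LC_add LC_scale.
  apply: LC_eq_all; by vm_compute.
- by rewrite H1 hodge_invol.
Qed.
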